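(* Let $R$ be a recursive ring and $\phi:\mathbb{Z}\to R^k$ an injection such that for every $m\ge1$ and every Diophantine subset $A\subseteq\mathbb{Z}^m$ over $\mathbb{Z}$, the image $\phi(A)=\{(\phi(a_1),\ldots,\phi(a_m)):(a_1,\ldots,a_m)\in A\}\subseteq R^{km}$ is Diophantine over $R$. Then $\phi$ is recursive (computable).
   Context: A ring $R$ is recursive if there is an injection of $R$ into $\mathbb{Z}$ with recursive image under which the ring operations correspond to recursive functions. A set $A\subseteq R^n$ is Diophantine over $R$ if there is a polynomial $p(T_1,\ldots,T_n,X_1,\ldots,X_s)$ with coefficients in $R$ such that $(t_1,\ldots,t_n)\in A$ iff $\exists x_1,\ldots,x_s\in R$ with $p(t_1,\ldots,t_n,x_1,\ldots,x_s)=0$. *)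

(* Defs.v *)
From HB Require Import structures.
From mathcomp Require Import all_boot all_order all_algebra.
Set Implicit Arguments. Unset Strict Implicit. Unset Printing Implicit Defensive.
Import Order.TTheory GRing.Theory Num.Theory.

(* Arguments are passed as a list; unused arguments are ignored.       *)
Inductive rcode : Type :=
| cZero : rcode
| cSucc : rcode
| cProj : nat -> rcode
| cComp : rcode -> list rcode -> rcode
| cPrec : rcode -> rcode -> rcode
| cMu   : rcode -> rcode.

Inductive all2P (A B : Type) (P : A -> B -> Prop) : list A -> list B -> Prop :=
| all2P_nil : all2P P nil nil
| all2P_cons a b la lb : P a b -> all2P P la lb -> all2P P (a :: la) (b :: lb).

Inductive reval : rcode -> list nat -> nat -> Prop :=
| ev_zero v : reval cZero v 0
| ev_succ x v : reval cSucc (x :: v) x.+1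
| ev_proj i v : reval (cProj i) v (nth 0 v i)
| ev_comp f gs v ys z :
    all2P (fun g y => reval g v y) gs ys -> reval f ys z -> reval (cComp f gs) v z
| ev_prec0 f g v y : reval f v y -> reval (cPrec f g) (0 :: v) y
| ev_precS f g n v y z :
    reval (cPrec f g) (n :: v) y -> reval g (n :: y :: v) z ->
    reval (cPrec f g) (n.+1 :: v) z
| ev_mu f v n :
    reval f (n :: v) 0 -> (forall m, m < n -> exists y, reval f (m :: v) y.+1) ->
    reval (cMu f) v n.

(* Standard bijection Z -> nat (0,-1,1,-2,2,... |-> 0,1,2,3,4,...). *)
Definition zcode (z : int) : nat :=
  match z with Posz n => n.*2 | Negz n => n.*2.+1 end.

Definition recursive1 (f : int -> int) : Prop :=
  exists c, forall a, reval c [:: zcode a] (zcode (f a)).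
Definition recursive2 (f : int -> int -> int) : Prop :=
  exists c, forall a b, reval c [:: zcode a; zcode b] (zcode (f a b)).
Definition recursive_set (P : int -> Prop) : Prop :=
  exists c, forall a, (P a -> reval c [:: zcode a] 1) /\ (~ P a -> reval c [:: zcode a] 0).

Definition recursive_presentation (R : comNzRingType) (e : R -> int) : Prop :=
  [/\ injective e,
      recursive_set (fun z => exists r, e r = z),
      (exists f, recursive2 f /\ forall x y, f (e x) (e y) = e (x + y)%R) &
      (exists f, recursive2 f /\ forall x y, f (e x) (e y) = e (x * y)%R)].

Definition recursive_ring (R : comNzRingType) : Prop :=
  exists e : R -> int, recursive_presentation e.

(* Polynomials with coefficients in R in variables of type V, as terms *)
Inductive pterm (R : Type) (V : Type) : Type :=
| PVar : V -> pterm R V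
| PConst : R -> pterm R V
| PAdd : pterm R V -> pterm R V -> pterm R V
| PMul : pterm R V -> pterm R V -> pterm R V.

Fixpoint peval (R : comNzRingType) (V : Type) (env : V -> R) (p : pterm R V) : R :=
  match p with
  | PVar v => env v
  | PConst c => c
  | PAdd p q => (peval env p + peval env q)%R
  | PMul p q => (peval env p * peval env q)%R
  end.

Definition diophantine (R : comNzRingType) (I : finType) (A : (I -> R) -> Prop) : Prop :=
  exists (s : nat) (p : pterm R (I + 'I_s)),
    forall t : I -> R,
      A t <-> exists x : 'I_s -> R,
                peval (fun v => match v with inl i => t i | inr j => x j end) p = 0%R.

Definition phi_image (R : comNzRingType) (k m : nat) (phi : int -> 'I_k -> R)
  (A : ('I_m -> int) -> Prop) : ('I_m * 'I_k -> R) -> Prop :=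
  fun y => exists a, A a /\ forall i j, y (i, j) = phi (a i) j.

(* Main.v *)
Require Import Defs.
From HB Require Import structures.
From mathcomp Require Import all_boot all_order all_algebra.
From Stdlib Require Import ClassicalEpsilon.
Set Implicit Arguments. Unset Strict Implicit. Unset Printing Implicit Defensive.
Import GRing.Theory.

Definition tot (f : seq nat -> nat) := exists c, forall v, reval c v (f v).

Lemma tot_ext f g : (forall v, f v = g v) -> tot f -> tot g.
Proof. move=> H [c Hc]; exists c => v; rewrite -H; exact: Hc. Qed.

Fixpoint alltot (gs : seq (seq nat -> nat)) : Prop :=
  if gs is g :: gs' then tot g /\ alltot gs' else True.

Lemma alltot_codes gs : alltot gs ->
  exists cs, forall v, all2P (fun c y => reval c v y) cs (map (fun g => g v) gs).
Proof.
elim: gs => [|g gs IH] /=; first by exists [::] => v; constructor.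
case=> [[c Hc] /IH [cs Hcs]]; exists (c :: cs) => v; constructor; [exact: Hc | exact: Hcs].
Qed.

Lemma tot_comp f gs : tot f -> alltot gs -> tot (fun v => f (map (fun g => g v) gs)).
Proof.
move=> [c Hc] /alltot_codes [cs Hcs]; exists (cComp c cs) => v.
econstructor; [exact: Hcs | exact: Hc].
Qed.

Lemma tot_comp1 f g : tot f -> tot g -> tot (fun v => f [:: g v]).
Proof. move=> Hf Hg; exact: (tot_comp (gs := [:: g]) Hf). Qed.
Lemma tot_comp2 f g h : tot f -> tot g -> tot h -> tot (fun v => f [:: g v; h v]).
Proof. move=> Hf Hg Hh; exact: (tot_comp (gs := [:: g; h]) Hf). Qed.
Lemma tot_comp3 f g h l : tot f -> tot g -> tot h -> tot l -> tot (fun v => f [:: g v; h v; l v]).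
Proof. move=> Hf Hg Hh Hl; exact: (tot_comp (gs := [:: g; h; l]) Hf). Qed.

Lemma tot_const n : tot (fun _ => n).
Proof.
elim: n => [|n [c Hc]]; first by exists cZero => v; constructor.
exists (cComp cSucc [:: c]) => v; econstructor; first by constructor; [exact: Hc | constructor].
constructor.
Qed.

Lemma tot_proj i : tot (fun v => nth 0 v i).
Proof. exists (cProj i) => v; constructor. Qed.

Lemma tot_succ : tot (fun v => (nth 0 v 0).+1).
Proof.
exists (cComp cSucc [:: cProj 0]) => v; econstructor; first by constructor; constructor.
constructor.
Qed.

Fixpoint precf (F G : seq nat -> nat) n w :=
  if n is n'.+1 then G (n' :: precf F G n' w :: w) else F w.

Lemma tot_precc F G : tot F -> tot G -> exists c, forall n w, reval c (n :: w) (precf F G n w).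
Proof.
move=> [cF HF] [cG HG]; exists (cPrec cF cG); elim=> [|n IH] w /=.
  by constructor; exact: HF.
econstructor; [exact: IH | exact: HG].
Qed.

Lemma tot_prec F G h hs : tot F -> tot G -> tot h -> alltot hs ->
  tot (fun v => precf F G (h v) (map (fun g => g v) hs)).
Proof.
move=> HF HG [ch Hh] /alltot_codes [cs Hcs].
have [c Hc] := tot_precc HF HG.
exists (cComp c (ch :: cs)) => v; econstructor; last exact: Hc.
constructor; [exact: Hh | exact: Hcs].
Qed.

Definition tot1 (f : nat -> nat) := tot (fun v => f (nth 0 v 0)).
Definition tot2 (f : nat -> nat -> nat) := tot (fun v => f (nth 0 v 0) (nth 0 v 1)).

Lemma tot1_comp f g : tot1 f -> tot g -> tot (fun v => f (g v)).
Proof. move=> Hf Hg; exact: (tot_comp1 Hf Hg). Qed.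
Lemma tot2_comp f g h : tot2 f -> tot g -> tot h -> tot (fun v => f (g v) (h v)).
Proof. move=> Hf Hg Hh; exact: (tot_comp2 Hf Hg Hh). Qed.

Lemma tot1_rec (z : nat) (g : nat -> nat -> nat) (f : nat -> nat) :
  tot2 g -> f 0 = z -> (forall n, f n.+1 = g n (f n)) -> tot1 f.
Proof.
move=> Hg H0 HS.
have := tot_prec (F := fun _ => z) (G := fun w => g (nth 0 w 0) (nth 0 w 1))
  (h := fun v => nth 0 v 0) (hs := [::]) (tot_const z) Hg (tot_proj 0) I.
apply: tot_ext => v /=; elim: (nth 0 v 0) => [|n IH] //=; by rewrite HS IH.
Qed.

Lemma tot2_rec (z : nat -> nat) (g : nat -> nat -> nat -> nat) (f : nat -> nat -> nat) :
  tot1 z -> tot (fun w => g (nth 0 w 0) (nth 0 w 1) (nth 0 w 2)) ->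
  (forall y, f 0 y = z y) -> (forall n y, f n.+1 y = g n (f n y) y) -> tot2 f.
Proof.
move=> Hz Hg H0 HS.
have := tot_prec (F := fun w => z (nth 0 w 0)) (G := fun w => g (nth 0 w 0) (nth 0 w 1) (nth 0 w 2))
  (h := fun v => nth 0 v 0) (hs := [:: fun v => nth 0 v 1]) Hz Hg (tot_proj 0) (conj (tot_proj 1) I).
apply: tot_ext => v /=; elim: (nth 0 v 0) => [|n IH] //=; by rewrite HS IH.
Qed.

Lemma tot_add : tot2 addn.
Proof.
apply: (tot2_rec (z := id) (g := fun _ r _ => r.+1)) => //.
- exact: tot_proj.
- by apply: tot1_comp tot_succ (tot_proj 1).
Qed.

Lemma tot_pred : tot1 predn.
Proof. apply: (tot1_rec (z := 0) (g := fun n _ => n)) => //; exact: tot_proj. Qed.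

Lemma tot_sub : tot2 subn.
Proof.
have H : tot2 (fun y x => x - y).
  apply: (tot2_rec (z := id) (g := fun _ r _ => r.-1)) => //.
  - exact: tot_proj.
  - by apply: tot1_comp tot_pred (tot_proj 1).
  - by move=> y; rewrite subn0.
  - by move=> n y; rewrite subnS.
apply: tot_ext (tot2_comp H (tot_proj 1) (tot_proj 0)) => v //.
Qed.
Definition dist x y := (x - y) + (y - x).
Lemma dist0 x y : (dist x y == 0) = (x == y).
Proof. by rewrite /dist addn_eq0 !subn_eq0 -eqn_leq. Qed.
Lemma tot_dist : tot2 dist.
Proof.
apply: tot2_comp tot_add _ _; [exact: tot2_comp tot_sub (tot_proj 0) (tot_proj 1)
  | exact: tot2_comp tot_sub (tot_proj 1) (tot_proj 0)].
Qed.

Definition eqnat x y : nat := 1 - dist x y.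
Lemma eqnatE x y : eqnat x y = (x == y).
Proof. rewrite /eqnat -dist0; by case: (dist x y). Qed.
Lemma tot_eqnat : tot2 eqnat.
Proof. apply: tot2_comp tot_sub (tot_const 1) tot_dist. Qed.

Fixpoint tri n := if n is n'.+1 then tri n' + n'.+1 else 0.
Lemma tot_tri : tot1 tri.
Proof.
apply: (tot1_rec (z := 0) (g := fun n r => r + n.+1)) => //.
apply: tot2_comp tot_add (tot_proj 1) tot_succ.
Qed.

Fixpoint Dg n := if n is n'.+1 then Dg n' + eqnat (tri (Dg n').+1) n'.+1 else 0.
Lemma tot_Dg : tot1 Dg.
Proof.
apply: (tot1_rec (z := 0) (g := fun n r => r + eqnat (tri r.+1) n.+1)) => //.
apply: tot2_comp tot_add (tot_proj 1) _.
apply: tot2_comp tot_eqnat _ tot_succ.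
apply: tot1_comp tot_tri (tot1_comp tot_succ (tot_proj 1)).
Qed.

Lemma Dg_inv n : tri (Dg n) <= n < tri (Dg n).+1.
Proof.
elim: n => [|n IH] //=; rewrite eqnatE.
case: eqP => [<-|Hne] /=.
  by rewrite addn1 leqnn /= -[X in X < _]addn0 ltn_add2l.
rewrite addn0; case/andP: IH => H1 H2; rewrite (leq_trans H1 (leqnSn _)) /=.
rewrite ltn_neqAle; apply/andP; split; last exact: H2.
by rewrite eq_sym; apply/eqP.
Qed.

Lemma tri_mono m n : m <= n -> tri m <= tri n.
Proof. elim: n => [|n IH]; first by rewrite leqn0 => /eqP ->.
rewrite leq_eqVlt => /orP [/eqP->//|]; rewrite ltnS => /IH H /=; exact: leq_trans H (leq_addr _ _).
Qed.

Lemma tri_uniq d d' n : tri d <= n < tri d.+1 -> tri d' <= n < tri d'.+1 -> d = d'.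
Proof.
move=> /andP [H1 H2] /andP [H3 H4]; apply/eqP; rewrite eqn_leq; apply/andP; split.
  rewrite leqNgt; apply/negP => Hlt; have := tri_mono Hlt; move=> H.
  by have := leq_ltn_trans (leq_trans H H1) H4; rewrite ltnn.
rewrite leqNgt; apply/negP => Hlt; have := tri_mono Hlt; move=> H.
by have := leq_ltn_trans (leq_trans H H3) H2; rewrite ltnn.
Qed.

Definition fstp n := n - tri (Dg n).
Definition sndp n := Dg n - fstp n.
Definition pairn x y := tri (x + y) + x.

Lemma Dg_pair x y : Dg (pairn x y) = x + y.
Proof.
apply: (tri_uniq (Dg_inv _)); rewrite /pairn leq_addr /=.
by rewrite ltn_add2l ltnS leq_addr.
Qed.
Lemma fstp_pair x y : fstp (pairn x y) = x.
Proof. by rewrite /fstp Dg_pair /pairn addKn. Qed.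
Lemma sndp_pair x y : sndp (pairn x y) = y.
Proof. by rewrite /sndp Dg_pair fstp_pair addKn. Qed.

Lemma tot_fstp : tot1 fstp.
Proof. apply: tot2_comp tot_sub (tot_proj 0) (tot1_comp tot_tri tot_Dg). Qed.
Lemma tot_sndp : tot1 sndp.
Proof. apply: tot2_comp tot_sub tot_Dg tot_fstp. Qed.

Definition compn i n := fstp (iter i sndp n).
Definition enc (l : seq nat) := foldr pairn 0 l.
Lemma compn_enc l i : i < size l -> compn i (enc l) = nth 0 l i.
Proof.
rewrite /compn; elim: l i => [|x l IH] [|i] //=; first by rewrite fstp_pair.
by rewrite ltnS -iterS iterSr sndp_pair => /IH.
Qed.

Lemma tot_iter_sndp i : tot1 (iter i sndp).
Proof. elim: i => [|i IH] /=; [exact: tot_proj | exact: tot1_comp tot_sndp IH]. Qed.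
Lemma tot_compn i : tot1 (compn i).
Proof. exact: tot1_comp tot_fstp (tot_iter_sndp i). Qed.

Lemma tot_odd : tot1 (fun n => odd n : nat).
Proof.
apply: (tot1_rec (z := 0) (g := fun _ r => 1 - r)) => //.
  exact: tot2_comp tot_sub (tot_const 1) (tot_proj 1).
by move=> n /=; case: (odd n).
Qed.
Lemma tot_half : tot1 half.
Proof.
apply: (tot1_rec (z := 0) (g := fun n r => r + odd n)) => //.
  exact: tot2_comp tot_add (tot_proj 1) (tot1_comp tot_odd (tot_proj 0)).
move=> n; rewrite -{1}[n]odd_double_half; case: (odd n) => /=.
  by rewrite add0n doubleK addn1.
by rewrite add0n uphalf_double addn0.
Qed.

Lemma tot_sumn (fs : seq (seq nat -> nat)) : alltot fs -> tot (fun v => sumn (map (fun f => f v) fs)).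
Proof.
elim: fs => [|f fs IH] /=; first by move=> _; exact: tot_const.
case=> Hf /IH Hs; exact: tot2_comp tot_add Hf Hs.
Qed.

Lemma alltot_mkseq (F : nat -> seq nat -> nat) m : (forall i, tot (F i)) -> alltot (mkseq F m).
Proof. rewrite /mkseq; move=> H; elim: (iota 0 m) => [|i l IH] //=. Qed.

Definition zdec (n : nat) : int := if odd n then Negz n./2 else Posz n./2.
Lemma zdecK n : zcode (zdec n) = n.
Proof.
rewrite /zdec; case Ho: (odd n) => /=; by rewrite -[in RHS](odd_double_half n) Ho.
Qed.
Lemma zcodeK a : zdec (zcode a) = a.
Proof. by case: a => m /=; rewrite /zdec /= ?odd_double ?doubleK //= uphalf_double. Qed.
Lemma zcode_inj : injective zcode.
Proof. by move=> a b H; rewrite -(zcodeK a) H zcodeK. Qed.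

Lemma tot_r2 f : recursive2 f -> tot2 (fun x y => zcode (f (zdec x) (zdec y))).
Proof.
move=> [c Hc]; exists (cComp c [:: cProj 0; cProj 1]) => v.
econstructor; first by constructor; [constructor | constructor; [constructor|constructor]].
have := Hc (zdec (nth 0 v 0)) (zdec (nth 0 v 1)); by rewrite !zdecK.
Qed.

Section RPart.
Variable R : comNzRingType.
Variable e : R -> int.
Hypothesis e_inj : injective e.
Variable fa fm : int -> int -> int.
Hypothesis Hfa : recursive2 fa.
Hypothesis Hfm : recursive2 fm.
Hypothesis Hfa' : forall x y, fa (e x) (e y) = e (x + y)%R.
Hypothesis Hfm' : forall x y, fm (e x) (e y) = e (x * y)%R.
Hypothesis Hset : recursive_set (fun z => exists r, e r = z).

Definition validb (n : nat) : bool :=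
  if excluded_middle_informative (exists r, e r = zdec n) then true else false.
Definition decR (n : nat) : R :=
  match excluded_middle_informative (exists r, e r = zdec n) with
  | left H => proj1_sig (constructive_indefinite_description _ H)
  | right _ => 0%R end.
Lemma decR_spec n : validb n -> zcode (e (decR n)) = n.
Proof.
rewrite /validb /decR; case: excluded_middle_informative => // H _.
case: constructive_indefinite_description => r /= ->; exact: zdecK.
Qed.
Lemma validb_code r : validb (zcode (e r)).
Proof. rewrite /validb; case: excluded_middle_informative => // H; case: H; exists r; by rewrite zcodeK. Qed.

Lemma tot_valid : tot1 (fun n => validb n : nat).
Proof.
move: Hset => [c Hc]; exists (cComp c [:: cProj 0]) => v.
econstructor; first by constructor; constructor.
set n := nth 0 v 0; have [H1 H2] := Hc (zdec n); rewrite zdecK in H1 H2.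
rewrite /validb; case: excluded_middle_informative => H; [exact: H1 | exact: H2].
Qed.

Definition addc x y := zcode (fa (zdec x) (zdec y)).
Definition mulc x y := zcode (fm (zdec x) (zdec y)).

Fixpoint pev (V : Type) (env : V -> nat) (p : pterm R V) : nat :=
  match p with
  | PVar v => env v
  | PConst c => zcode (e c)
  | PAdd p q => addc (pev env p) (pev env q)
  | PMul p q => mulc (pev env p) (pev env q)
  end.

Lemma pev_ok V (t : V -> R) env p : (forall v, env v = zcode (e (t v))) ->
  pev env p = zcode (e (peval t p)).
Proof.
move=> H; elim: p => [v|c|p IHp q IHq|p IHp q IHq] //=;
  by rewrite ?IHp ?IHq /addc /mulc !zcodeK ?Hfa' ?Hfm'.
Qed.

Lemma tot_pev V (envf : V -> seq nat -> nat) p : (forall x, tot (envf x)) ->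
  tot (fun w => pev (fun x => envf x w) p).
Proof.
move=> H; elim: p => [v|c|p IHp q IHq|p IHp q IHq] /=.
- exact: H.
- exact: tot_const.
- exact: tot2_comp (tot_r2 Hfa) IHp IHq.
- exact: tot2_comp (tot_r2 Hfm) IHp IHq.
Qed.

Lemma sumn_map0 (T : eqType) (F : T -> nat) (l : seq T) :
  sumn (map F l) = 0 <-> forall i, i \in l -> F i = 0.
Proof.
elim: l => [|x l IH] /=; first by split.
split.
  move/eqP; rewrite addn_eq0 => /andP [/eqP H1 /eqP /IH H2] i.
  by rewrite inE => /orP [/eqP ->|/H2].
move=> H; rewrite H ?inE ?eqxx //=; apply/IH => i Hi; apply: H; by rewrite inE Hi orbT.
Qed.

Lemma sumn_mk (G : nat -> seq nat -> nat) w n :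
  sumn (map (fun f => f w) (mkseq G n)) = 0 <-> forall i, i < n -> G i w = 0.
Proof.
rewrite /mkseq -map_comp sumn_map0; split => H i.
  by move=> Hi; apply: H; rewrite mem_iota.
by rewrite mem_iota => /= Hi; apply: H.
Qed.

Variable k s : nat.
Variable phi : int -> 'I_k -> R.
Hypothesis phi_inj : forall a b, (forall j, phi a j = phi b j) -> a = b.
Definition i1 : 'I_2 := @Ordinal 2 1 isT.
Definition Aset (a : 'I_2 -> int) : Prop := a i1 = (a ord0 + 1)%R.
Variable p : pterm R (('I_2 * 'I_k) + 'I_s).
Definition envR (y : 'I_2 * 'I_k -> R) (x : 'I_s -> R) :=
  fun v => match v with inl i => y i | inr j => x j end.
Hypothesis Hp : forall y, phi_image phi Aset y <-> exists x, peval (envR y x) p = 0%R.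

Definition oth (d : 'I_2) : 'I_2 := if d == ord0 then i1 else ord0.
Lemma I2_cases (i : 'I_2) : i = ord0 \/ i = i1.
Proof. case: i => [[|[|m]] Hm]; [left|right|by []]; exact: val_inj. Qed.
Lemma oth_neq d i : i != d -> i = oth d.
Proof. by rewrite /oth; case: (I2_cases d) => ->; case: (I2_cases i) => ->. Qed.
Lemma oth_ne d : (oth d == d) = false.
Proof. by rewrite /oth; case: (I2_cases d) => ->. Qed.
Lemma Aset_uniq a b d : Aset a -> Aset b -> a d = b d -> forall i, a i = b i.
Proof.
rewrite /Aset => Ha Hb; case: (I2_cases d) => -> H i; case: (I2_cases i) => -> //.
- by rewrite Ha Hb H.
- by apply: (GRing.addIr 1%R); rewrite -Ha -Hb H.
Qed.

Definition Inv (a : int) (u : nat) := forall j : 'I_k, compn j u = zcode (e (phi a j)).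

Definition envf (d : 'I_2) (x : ('I_2 * 'I_k) + 'I_s) : seq nat -> nat :=
  match x with
  | inl (i, j) => if i == d then fun w => compn j (nth 0 w 2) else fun w => compn j (nth 0 w 0)
  | inr l => fun w => compn (k + l) (nth 0 w 0) end.

Definition gs (d : 'I_2) (w : seq nat) : nat :=
  sumn (map (fun f => f w) (mkseq (fun i w => 1 - validb (compn i (nth 0 w 0))) (k + s)))
  + dist (pev (fun x => envf d x w) p) (zcode (e 0%R)).

Lemma tot_gs d : tot (gs d).
Proof.
apply: tot2_comp tot_add _ _.
  apply: tot_sumn; apply: alltot_mkseq => i.
  exact: tot2_comp tot_sub (tot_const 1) (tot1_comp tot_valid (tot_compn i)).
apply: tot2_comp tot_dist (tot_pev _ _) (tot_const _).
case=> [[i j]|l] /=; last exact: tot_compn.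
by case: (i == d); [exact: tot1_comp (tot_compn j) (tot_proj 2) | exact: tot_compn].
Qed.

Lemma gs0 d w : gs d w = 0 ->
  (forall i, i < k + s -> validb (compn i (nth 0 w 0))) /\
  pev (fun x => envf d x w) p = zcode (e 0%R).
Proof.
rewrite /gs => /eqP; rewrite addn_eq0 => /andP [/eqP /sumn_mk H1 /eqP H2]; split.
  by move=> i /H1 /=; case: (validb _).
by apply/eqP; rewrite -dist0 H2.
Qed.

Lemma step_exists d a a2 u w t : Aset a2 -> a2 d = a -> Inv a u ->
  exists n, gs d (n :: t :: u :: w) = 0.
Proof.
move=> HA Hd Hu.
pose y := fun ij : 'I_2 * 'I_k => phi (a2 ij.1) ij.2.
have [x Hx] : exists x, peval (envR y x) p = 0%R by apply/Hp; exists a2.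
pose L := [seq zcode (e (phi (a2 (oth d)) j)) | j <- enum 'I_k] ++
          [seq zcode (e (x l)) | l <- enum 'I_s].
have HsL : size L = k + s.
  by rewrite /L size_cat !size_map -!enumT !size_enum_ord.
have HL1 : forall j : 'I_k, compn j (enc L) = zcode (e (phi (a2 (oth d)) j)).
  move=> j; rewrite compn_enc ?HsL ?(leq_trans (ltn_ord j) (leq_addr _ _)) //.
  rewrite nth_cat size_map size_enum_ord ltn_ord.
  by rewrite (nth_map j) ?size_enum_ord // nth_ord_enum.
have HL2 : forall l : 'I_s, compn (k + l) (enc L) = zcode (e (x l)).
  move=> l; rewrite compn_enc ?HsL ?ltn_add2l //.
  rewrite nth_cat size_map size_enum_ord ltnNge leq_addr /= addKn.
  by rewrite (nth_map l) ?size_enum_ord // nth_ord_enum.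
exists (enc L); rewrite /gs /=.
have -> : sumn [seq f0 [:: enc L, t, u & w] | f0 <- mkseq (fun (i : nat) (w0 : seq nat) =>
    1 - validb (compn i (nth 0 w0 0))) (k + s)] = 0.
  apply/sumn_mk => i Hi /=; case: (ltnP i k) => Hik.
    by rewrite (HL1 (Ordinal Hik)) validb_code.
  have Hl : i - k < s by rewrite ltn_subLR.
  by rewrite -(subnKC Hik) (HL2 (Ordinal Hl)) validb_code.
rewrite add0n (@pev_ok _ (envR y x)); last first.
  case=> [[i j]|l] /=; last exact: HL2.
  case: eqP => [->|/eqP Hne]; first by rewrite /y /= Hd.
  by rewrite HL1 /y /= -(oth_neq Hne).
by rewrite Hx /dist subnn.
Qed.

Lemma step_correct d a a2 u w t n : Aset a2 -> a2 d = a -> Inv a u ->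
  gs d (n :: t :: u :: w) = 0 -> Inv (a2 (oth d)) n.
Proof.
move=> HA Hd Hu /gs0 [Hv Hpev] j.
pose y := fun ij : 'I_2 * 'I_k => if ij.1 == d then phi a ij.2 else decR (compn ij.2 n).
pose x := fun l : 'I_s => decR (compn (k + l) n).
have Hj : forall j : 'I_k, j < k + s by move=> j'; exact: leq_trans (ltn_ord j') (leq_addr _ _).
rewrite (@pev_ok _ (envR y x)) in Hpev; last first.
  case=> [[i j']|l] /=.
    by rewrite /y /=; case: (i == d) => //; rewrite decR_spec //; exact: Hv.
  by rewrite decR_spec //; apply: Hv; rewrite ltn_add2l.
have /Hp [a' [HA' Hy]] : exists x0, peval (envR y x0) p = 0%R.
  by exists x; apply: e_inj; apply: zcode_inj.
have Had : a' d = a2 d.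
  rewrite Hd; apply: phi_inj => j'; have := Hy d j'; by rewrite /y /= eqxx.
rewrite -(Aset_uniq HA' HA Had) -(Hy (oth d) j) /y /= oth_ne decR_spec //; exact: Hv.
Qed.

Lemma step_mu d a a2 u w t cg : Aset a2 -> a2 d = a -> Inv a u ->
  (forall v, reval cg v (gs d v)) ->
  exists n, reval (cMu cg) (t :: u :: w) n /\ Inv (a2 (oth d)) n.
Proof.
move=> HA Hd Hu Hcg.
have exP : exists n, (fun n => gs d (n :: t :: u :: w) == 0) n.
  by have [n Hn] := step_exists w t HA Hd Hu; exists n; apply/eqP.
case: (ex_minnP exP) => n /eqP Hn Hmin; exists n; split; last first. exact: (step_correct HA Hd Hu Hn).
constructor; first by rewrite -Hn; exact: Hcg.
move=> m Hm; case E: (gs d (m :: t :: u :: w)) => [|y].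
  by have := Hmin m (introT eqP E); rewrite leqNgt Hm.
by exists y; rewrite -E; exact: Hcg.
Qed.

Lemma iter_ok d (f : nat -> int) cg cF n0 w : (forall v, reval cg v (gs d v)) ->
  (forall v, reval cF v n0) -> Inv (f 0) n0 ->
  (forall t, exists a2, [/\ Aset a2, a2 d = f t & a2 (oth d) = f t.+1]) ->
  forall t, exists st, reval (cPrec cF (cMu cg)) (t :: w) st /\ Inv (f t) st.
Proof.
move=> Hcg HF H0 Hstep; elim=> [|t [st [Hr Hi]]].
  by exists n0; split => //; constructor.
have [a2 [HA Hd Hn]] := Hstep t.
have [n [Hr' Hi']] := step_mu w t HA Hd Hi Hcg.
exists n; split; first exact: ev_precS Hr Hr'.
by rewrite -Hn.
Qed.
End RPart.

Unset Implicit Arguments. Set Strict Implicit.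
Theorem mainTheorem9 (R : comNzRingType) (e : R -> int)
  (He : recursive_presentation e) (k : nat) (phi : int -> 'I_k -> R)
  (phi_inj : forall a b, (forall j, phi a j = phi b j) -> a = b)
  (Hdioph : forall (m : nat) (A : ('I_m -> int) -> Prop), (0 < m)%N ->
     diophantine A -> diophantine (phi_image phi A)) :
  forall j : 'I_k, recursive1 (fun a => e (phi a j)).
Proof.
move=> j.
case: He => e_inj Hset [fa [Hfa Hfa']] [fm [Hfm Hfm']].
have HdA : diophantine Aset.
  exists 0%N, (PAdd (PAdd (PVar _ (inl ord0)) (PConst _ 1%R))
                    (PMul (PConst _ (-1)%R) (PVar _ (inl i1)))) => t /=.
  split.
    rewrite /Aset => ->; exists (fun _ => 0%R).
    by rewrite mulN1r subrr.
  case=> _ /eqP; rewrite mulN1r subr_eq0 => /eqP H; by rewrite /Aset H.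
have [s [p Hp]] := Hdioph 2%N Aset isT HdA.
pose n0 := enc [seq zcode (e (phi 0%R j)) | j <- enum 'I_k].
have Hn0 : Inv e phi 0%R n0.
  move=> j'; rewrite compn_enc; last by rewrite size_map size_enum_ord.
  by rewrite (nth_map j') ?size_enum_ord // nth_ord_enum.
have [cF HF] := tot_const n0.
have [cgF HgF] := tot_gs Hfa Hfm Hset p ord0.
have [cgB HgB] := tot_gs Hfa Hfm Hset p i1.
have [cH HH] := tot_half.
have [cO HO] := tot_odd.
have [cJ HJ] := tot_compn j.
pose prog := cComp cJ [:: cComp (cPrec (cProj 0) (cProj 3))
   [:: cO; cComp (cPrec cF (cMu cgF)) [:: cH];
           cComp (cPrec cF (cMu cgB)) [:: cComp cSucc [:: cH]]]].
exists prog => a.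
set N := zcode a.
have HI := iter_ok e_inj Hfa' Hfm' phi_inj Hp.
have HstF : forall t : nat, exists a2 : 'I_2 -> int,
   [/\ Aset a2, a2 ord0 = (fun t : nat => (t : int)) t & a2 (oth ord0) = (fun t : nat => (t : int)) t.+1].
  move=> t; exists (fun i : 'I_2 => (t%:Z + (i : nat)%:Z)%R); split => /=.
  - by rewrite /Aset /= addr0.
  - by rewrite addr0.
  - by rewrite /oth /= -PoszD addn1.
have HstB : forall tt : nat, exists a2 : 'I_2 -> int,
   [/\ Aset a2, a2 i1 = (fun tt : nat => (- (tt : int))%R) tt & a2 (oth i1) = (fun tt : nat => (- (tt : int))%R) tt.+1].
  move=> tt; exists (fun i : 'I_2 => (- (tt.+1 : int) + (i : nat)%:Z)%R); split => /=.
  - by rewrite /Aset /= addr0.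
  - by rewrite -[(tt.+1)%N]addn1 PoszD opprD addrNK.
  - by rewrite /oth /= addr0.
have Hn0' : Inv e phi (- (0%N : int))%R n0 by rewrite oppr0.
have [stF [HrF HiF]] := HI _ _ _ _ _ [::] HgF HF Hn0 HstF (N./2).
have [stB [HrB HiB]] := HI _ _ _ _ _ [::] HgB HF Hn0' HstB (N./2).+1.
have Hsel : reval (cComp (cPrec (cProj 0) (cProj 3))
   [:: cO; cComp (cPrec cF (cMu cgF)) [:: cH];
           cComp (cPrec cF (cMu cgB)) [:: cComp cSucc [:: cH]]]) [:: N]
   (if odd N then stB else stF).
  apply: (ev_comp (ys := [:: (odd N : nat); stF; stB])).
    apply: all2P_cons; first exact: (HO [:: N]).
    apply: all2P_cons.
      apply: (ev_comp (ys := [:: N./2])) HrF.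
      by apply: all2P_cons; [exact: (HH [:: N]) | constructor].
    apply: all2P_cons; last by constructor.
    apply: (ev_comp (ys := [:: (N./2).+1])) HrB.
    apply: all2P_cons; last by constructor.
    apply: (ev_comp (ys := [:: N./2])); last by constructor.
    by apply: all2P_cons; [exact: (HH [:: N]) | constructor].
  case: (odd N) => /=.
    apply: (ev_precS (y := stF)); first exact: (ev_prec0 _ (ev_proj 0 [:: stF; stB])).
    exact: (ev_proj 3 [:: 0; stF; stF; stB]).
  exact: (ev_prec0 _ (ev_proj 0 [:: stF; stB])).
have Heq : compn j (if odd N then stB else stF) = zcode (e (phi a j)).
  have : N = zcode a by [].
  clearbody N; case: a => m EN; rewrite EN /= in HiF HiB *.
    by rewrite odd_double HiF doubleK.
  by rewrite odd_double /= HiB uphalf_double NegzE.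
rewrite /prog -Heq.
apply: (ev_comp (ys := [:: if odd N then stB else stF])); last exact: (HJ [:: _]).
by apply: all2P_cons; [exact: Hsel | constructor].
Qed.
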